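(* Let $n \geq 2$ be an integer and let $T_n=\{(1\,2),(1\,3),\dots,(1\,n)\} \subseteq S_n$. For each integer $1 \leq \ell \leq n-1$, both $n-\ell$ and $-(n-\ell)$ are eigenvalues of the Cayley graph $X(S_n,T_n)$, each with multiplicity at least $\binom{n-2}{\ell-1}$. If $n\ge 4$, then $0$ is an eigenvalue of $X(S_n,T_n)$ with multiplicity at least $\binom{n-1}{2}$.
   Context: For a group $G$ and an inverse-closed subset $T\subseteq G$, the Cayley graph $X(G,T)$ is the (undirected) graph with vertex set $G$ and an edge $\{g,tg\}$ for each $g\in G$ and $t\in T$. The spectrum/eigenvalues of a graph are those of its adjacency matrix. $S_n$ is the symmetric group on $[n]=\{1,\dots,n\}$. *)

(* Defs.v *)
From HB Require Import structures.
From mathcomp Require Import all_boot all_order all_algebra all_fingroup all_field.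
Set Implicit Arguments. Unset Strict Implicit. Unset Printing Implicit Defensive.
Import GRing.Theory Num.Theory.
Local Open Scope ring_scope.

(* The set T_n = {(1 2), (1 3), ..., (1 n)} in S_n = 'S_n (perms of 'I_n);
   point 1 of the paper is the ordinal 0 here. *)
Definition Tn (n : nat) : {set 'S_n} :=
  [set s : 'S_n | [exists i : 'I_n, exists j : 'I_n,
      [&& val i == 0%N, i != j & s == tperm i j]]].

(* Adjacency matrix of the Cayley graph X(G,T): vertex set G (indexed via
   enum_val), and g ~ h iff h = t g for some t in T, i.e. h g^-1 \in T. *)
Definition cayley_adj (gT : finGroupType) (T : {set gT}) : 'M[algC]_#|gT| :=
  \matrix_(i, j) ((enum_val j * (enum_val i)^-1 \in T)%g)%:R.

(* Multiplicity of an eigenvalue of the (real symmetric, hence diagonalizable)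
   adjacency matrix = dimension of its eigenspace. *)
Definition eig_mult (m : nat) (A : 'M[algC]_m) (lam : algC) : nat :=
  \rank (eigenspace A lam).

(* Main.v *)
Require Import Defs.
From HB Require Import structures.
From mathcomp Require Import all_boot all_order all_algebra all_fingroup all_field.
From mathcomp Require Import ring.
Import GRing.Theory Num.Theory.
Local Open Scope ring_scope.
Set Implicit Arguments. Unset Strict Implicit. Unset Printing Implicit Defensive.

Section Frame.
Variable m : nat.
Local Notation n := m.+2.
Local Notation N := #|{perm 'I_n}|.
Local Notation A := (cayley_adj (Tn n)).
Local Notation tau j := (tperm (ord0 : 'I_n) j).

Definition eigfun (phi : 'S_n -> algC) (lam : algC) :=
  forall u : 'S_n, \sum_(j | j != ord0) phi (u * tau j)%g = lam * phi u.

Lemma TnE : Tn n = [set tau j | j in [set j : 'I_n | j != ord0]].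
Proof.
apply/setP => s; rewrite inE; apply/idP/imsetP.
  case/existsP => i /existsP [j /and3P [/eqP i0 ij /eqP ->]].
  have ei : i = ord0 by apply/val_inj.
  by rewrite ei in ij *; exists j; rewrite // inE eq_sym.
case=> j; rewrite inE => j0 ->; apply/existsP; exists ord0; apply/existsP; exists j.
by rewrite /= eq_sym j0 eqxx.
Qed.

Lemma Tn_sum (G : 'S_n -> algC) :
  \sum_(s in Tn n) G s = \sum_(j | j != ord0) G (tau j).
Proof.
rewrite TnE big_imset /=; last first.
  by move=> j k _ _ /= e; move: (congr1 (fun s : 'S_n => s ord0) e); rewrite !tpermL.
by apply: eq_bigl => j; rewrite inE.
Qed.

Lemma sum_perm_enum (F : 'S_n -> algC) :
  \sum_(g < N) F (enum_val g) = \sum_s F s.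
Proof.
symmetry; apply: (reindex (fun g : 'I_N => enum_val g)).
by exists enum_rank => x _; [rewrite enum_valK | rewrite enum_rankK].
Qed.

Lemma coreA phi lam (H : eigfun phi lam) (h : 'I_N) :
  \sum_g phi ((enum_val g)^-1)%g * (A - lam%:M) g h = 0.
Proof.
under eq_bigr do rewrite !mxE mulrBr.
rewrite sumrB.
rewrite [X in _ - X](bigD1 h) //= eqxx [X in _ - (_ + X)]big1 /=; last first.
  by move=> g /negbTE ->; rewrite mulr0n mulr0.
rewrite addr0 mulr1n.
set h' := enum_val h.
have -> : \sum_(g < N) phi (enum_val g)^-1%g * ((enum_val h * (enum_val g)^-1)%g \in Tn n)%:R
   = \sum_s phi s^-1%g * ((h' * s^-1)%g \in Tn n)%:R by rewrite -sum_perm_enum.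
rewrite (reindex_inj (@invg_inj _)) /=.
under eq_bigr do rewrite invgK.
rewrite (reindex_inj (mulgI (h'^-1)%g)) /=.
under eq_bigr do rewrite mulKVg.
have -> : \sum_i phi (h'^-1 * i)%g * (i \in Tn n)%:R = \sum_(i in Tn n) phi (h'^-1 * i)%g.
  by rewrite [RHS]big_mkcond; apply: eq_bigr => i _; case: (i \in Tn n); rewrite ?mulr1 ?mulr0.
rewrite Tn_sum.
by rewrite H mulrC subrr.
Qed.

Definition Xf c (phi : 'I_c -> 'S_n -> algC) : 'M[algC]_(c, N) :=
  \matrix_(i, g) phi i ((enum_val g)^-1)%g.
Definition Yf c (u : 'I_c -> 'S_n) : 'M[algC]_(N, c) :=
  \matrix_(g, j) ((enum_val g)^-1 == u j)%g%:R.

Lemma XfA c (phi : 'I_c -> 'S_n -> algC) lam :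
  (forall i, eigfun (phi i) lam) -> Xf phi *m (A - lam%:M) = 0.
Proof.
move=> H; apply/matrixP => i h; rewrite !mxE.
under eq_bigr do rewrite mxE.
exact: coreA.
Qed.

Lemma XfYf c d (phi : 'I_c -> 'S_n -> algC) (u : 'I_d -> 'S_n) :
  Xf phi *m Yf u = \matrix_(i, j) phi i (u j).
Proof.
apply/matrixP => i j; rewrite !mxE.
under eq_bigr do rewrite !mxE.
rewrite (sum_perm_enum (fun s => phi i s^-1%g * (s^-1 == u j)%g%:R)).
rewrite (reindex_inj (@invg_inj _)) /=.
under eq_bigr do rewrite invgK.
rewrite (bigD1 (u j)) //= eqxx mulr1 big1 ?addr0 //.
by move=> s /negbTE ->; rewrite mulr0.
Qed.

Lemma rank_lb c (X : 'M[algC]_(c, N)) (Y : 'M[algC]_(N, c)) lam :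
  X *m (A - lam%:M) = 0 -> X *m Y \in unitmx -> (c <= eig_mult A lam)%N.
Proof.
move=> HX HU; rewrite /eig_mult /eigenspace.
have hs : (X <= kermx (A - lam%:M))%MS by apply/sub_kermxP.
have h1 := mxrankS hs.
have h2 := mxrankM_maxl X Y.
rewrite (mxrank_unit HU) in h2.
exact: leq_trans h2 h1.
Qed.

Lemma eigenvalue_of lam : (0 < eig_mult A lam)%N -> eigenvalue A lam.
Proof.
rewrite /eig_mult /eigenvalue => h; apply/negP => /eqP e.
by rewrite e mxrank0 in h.
Qed.

End Frame.

Lemma ext_perm (T : finType) (s : seq T) (f : T -> T) :
  uniq s -> {in s &, injective f} -> exists u : {perm T}, {in s, forall x, u x = f x}.
Proof.
elim: s => [|x s IH] /=; first by move=> _ _; exists 1%g.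
case/andP => xs us finj.
have [|u Hu] := IH us.
  by move=> y z ys zs; apply: finj; rewrite inE ?ys ?zs orbT.
exists (u * tperm (u x) (f x))%g => y; rewrite inE permM => /orP [/eqP -> | ys].
  by rewrite tpermL.
have yx : y != x by apply: contraNneq xs => <-.
rewrite (Hu y ys) tpermD //.
  by rewrite -(Hu y ys) (inj_eq perm_inj) eq_sym.
apply: contra yx => /eqP e; apply/eqP/finj; rewrite ?inE ?ys ?eqxx ?orbT //.
Qed.

Lemma uniq_map_in (T1 T2 : eqType) (f : T1 -> T2) (s : seq T1) :
  uniq (map f s) -> {in s &, injective f}.
Proof.
elim: s => [|x s IH] //= /andP [fx us] y z; rewrite !inE.
case/orP => [/eqP -> | ys]; case/orP => [/eqP -> | zs] // e.
- by move: fx; rewrite e map_f.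
- by move: fx; rewrite -e map_f.
- exact: IH.
Qed.
Section Basic.
Variable m : nat.
Local Notation n := m.+2.
Definition one : 'I_n := lift ord0 ord0.
Definition v2 (t : 'I_m) : 'I_n := lift ord0 (lift ord0 t).
Definition w (t : 'I_m) (y : 'I_n) : algC := (y == v2 t)%:R - (y == one)%:R.

Lemma v2_inj : injective v2.
Proof. by move=> s t /lift_inj /lift_inj. Qed.
Lemma v2_neq0 t : (v2 t == ord0) = false.
Proof. by apply/negbTE; rewrite eq_sym neq_lift. Qed.
Lemma v2_neq1 t : (v2 t == one) = false.
Proof. by rewrite /v2 /one (inj_eq lift_inj); apply/negbTE; rewrite eq_sym neq_lift. Qed.
Lemma one_neq0 : (one == ord0) = false.
Proof. by apply/negbTE; rewrite eq_sym neq_lift. Qed.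

Lemma w0 t : w t ord0 = 0.
Proof. by rewrite /w eq_sym v2_neq0 eq_sym one_neq0 subrr. Qed.
Lemma wv2 t s : w t (v2 s) = (s == t)%:R.
Proof. by rewrite /w (inj_eq v2_inj) v2_neq1 subr0. Qed.

Lemma sum_delta (c : 'I_n) : \sum_(y : 'I_n) ((y == c)%:R : algC) = 1.
Proof. by rewrite (bigD1 c) //= eqxx big1 ?addr0 // => y /negbTE ->. Qed.

Lemma wsum t : \sum_y w t y = 0.
Proof. by rewrite sumrB !sum_delta subrr. Qed.
End Basic.

Lemma cofactor_eq (R : comPzRingType) p (M M' : 'M[R]_p) i j :
  (forall r c, r != i -> M r c = M' r c) -> cofactor M i j = cofactor M' i j.
Proof.
move=> H; rewrite /cofactor; congr (_ * _); congr (\det _).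
by apply/matrixP => r c; rewrite !mxE H // eq_sym neq_lift.
Qed.

Lemma det_row0 (R : comPzRingType) p (M : 'M[R]_p) i :
  (forall c, M i c = 0) -> \det M = 0.
Proof. by move=> H; rewrite (expand_det_row M i) big1 // => c _; rewrite H mul0r. Qed.

Lemma det_col0 (R : comPzRingType) p (M : 'M[R]_p) j :
  (forall r, M r j = 0) -> \det M = 0.
Proof. by move=> H; rewrite -det_tr (det_row0 (i := j)) // => c; rewrite mxE H. Qed.

Lemma det_row_sum (R : comPzRingType) p (I : finType) (a0 : I) (F : I -> 'M[R]_p) i0 :
  (forall a b r c, r != i0 -> F a r c = F b r c) ->
  (forall c, \sum_a F a i0 c = 0) -> \sum_a \det (F a) = 0.
Proof.
move=> H1 H2.
under eq_bigr => a _ do rewrite (expand_det_row (F a) i0).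
rewrite exchange_big /= big1 // => c _.
under eq_bigr => a _ do rewrite (cofactor_eq (M' := F a0) c (H1 a a0)).
by rewrite -mulr_suml H2 mul0r.
Qed.

Section Hook.
Variables m k : nat.
Hypothesis hk : (k <= m)%N.
Local Notation n := m.+2.
Local Notation tau j := (tperm (ord0 : 'I_n) j).

Definition tE (T : {set 'I_m}) (a : 'I_k) : 'I_m := nth (widen_ord hk a) (enum T) a.

Lemma tE_in (T : {set 'I_m}) a : #|T| = k -> tE T a \in T.
Proof. by move=> cT; rewrite /tE -mem_enum mem_nth // -cardE cT. Qed.

Lemma tE_inj (T : {set 'I_m}) : #|T| = k -> injective (tE T).
Proof.
move=> cT a b; rewrite /tE.
have sb : (b < size (enum T))%N by rewrite -cardE cT.
rewrite (set_nth_default (widen_ord hk a) _ sb) => /eqP.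
by rewrite nth_uniq ?enum_uniq -?cardE ?cT // => /eqP/val_inj.
Qed.

Lemma tE_onto (T : {set 'I_m}) t : #|T| = k -> t \in T -> exists a, tE T a = t.
Proof.
move=> cT tT; have hi : (index t (enum T) < k)%N by rewrite -cT cardE index_mem mem_enum.
by exists (Ordinal hi); rewrite /tE /= nth_index // mem_enum.
Qed.

Definition V (T : {set 'I_m}) (x : 'I_k -> 'I_n) : algC :=
  \det (\matrix_(b, a) w (tE T a) (x b)).

Lemma V_zero T x b0 : x b0 = ord0 -> V T x = 0.
Proof. by move=> e; rewrite /V (det_row0 (i := b0)) // => c; rewrite mxE e w0. Qed.

Lemma V_alt T x b1 b2 : b1 != b2 -> x b1 = x b2 -> V T x = 0.
Proof. by move=> ne e; apply: (determinant_alternate ne) => c; rewrite !mxE e. Qed.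

Lemma V_ext T x y : x =1 y -> V T x = V T y.
Proof. by move=> H; rewrite /V; congr (\det _); apply/matrixP => b a; rewrite !mxE H. Qed.

Definition upd (x : 'I_k -> 'I_n) b0 (j : 'I_n) := fun b => if b == b0 then j else x b.

Lemma V_sum T x b0 : \sum_j V T (upd x b0 j) = 0.
Proof.
apply: (det_row_sum ord0 (i0 := b0)).
  by move=> a b r c rb; rewrite !mxE /upd (negbTE rb).
by move=> c; under eq_bigr do rewrite mxE /upd eqxx; rewrite wsum.
Qed.

Lemma V_eig T (x : 'I_k -> 'I_n) : injective x ->
  \sum_(j | j != ord0) V T (fun b => tau j (x b)) = (m.+1 - k)%:R * V T x.
Proof.
move=> xinj.
have sum0 (F : 'I_n -> algC) : \sum_(j | j != ord0) F j = \sum_j F j - F ord0.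
  by rewrite [in RHS](bigD1 ord0) //= addrAC subrr add0r.
case: (pickP (fun b => x b == ord0)) => [b0 /eqP xb0 | nz].
  rewrite (V_zero T xb0) mulr0.
  rewrite (eq_bigr (fun j => V T (upd x b0 j))); last first.
    move=> j j0.
    case: (pickP (fun b => x b == j)) => [b1 /eqP xb1 | nj].
      have b10 : b1 != b0 by apply: contra_neq j0 => e; rewrite -xb1 e.
      rewrite (@V_zero T _ b1) ?xb1 ?tpermR //.
      by rewrite (V_alt T b10) // /upd eqxx (negbTE b10).
    apply: V_ext => b; rewrite /upd.
    case: eqP => [-> | /eqP bb0]; first by rewrite xb0 tpermL.
    rewrite tpermD //; last by rewrite eq_sym nj.
    by apply: contra bb0 => /eqP e; apply/eqP/xinj; rewrite xb0 e.
  rewrite sum0 V_sum (@V_zero T _ b0) ?subrr // /upd eqxx //.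
have nz' b : x b != ord0 by rewrite nz.
set S := [set x b | b in 'I_k].
rewrite (eq_bigr (fun j => if j \in S then 0 else V T x)); last first.
  move=> j j0; case: ifP => [/imsetP [b _ ->] | jS].
    by rewrite (@V_zero T _ b) // tpermR.
  apply: V_ext => b; rewrite tpermD //; first by rewrite eq_sym nz'.
  by apply: contraFneq jS => ->; apply: imset_f.
rewrite sum0 ifN; last by apply/imsetP => -[b _ e]; move: (nz' b); rewrite -e eqxx.
have -> : \sum_j (if j \in S then 0 else V T x) = \sum_(j in ~: S) V T x.
  by rewrite [RHS]big_mkcond; apply: eq_bigr => j _; rewrite in_setC; case: (j \in S).
rewrite sumr_const cardsCs setCK card_imset // card_ord card_ord.
have -> : (m.+2 - k = (m.+1 - k).+1)%N by rewrite subSn // (leq_trans hk).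
by rewrite mulrS addrC addrK mulr_natl.
Qed.

End Hook.

Section HookFam.
Variables m k : nat.
Hypothesis hk : (k <= m)%N.
Local Notation n := m.+2.
Local Notation A := (cayley_adj (Tn n)).
Local Notation tau j := (tperm (ord0 : 'I_n) j).

Lemma hkn : (k <= n)%N. Proof. exact: leq_trans hk (leq_trans (leqnSn m) (leqnSn m.+1)). Qed.
Definition pos (b : 'I_k) : 'I_n := widen_ord hkn b.
Lemma pos_inj : injective pos.
Proof. by move=> a b e; apply/val_inj; exact: (congr1 val e). Qed.

Definition phiH (T : {set 'I_m}) (u : 'S_n) : algC := V hk T (fun b => u (pos b)).
Definition phiHs (T : {set 'I_m}) (u : 'S_n) : algC := (-1) ^+ (odd_perm u) * phiH T u.

Lemma phiH_eig T : eigfun (phiH T) (m.+1 - k)%:R.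
Proof.
move=> u; rewrite /phiH -V_eig; last by move=> a b /perm_inj /pos_inj.
by apply: eq_bigr => j _; apply: V_ext => b; rewrite permM.
Qed.

Lemma phiHs_eig T : eigfun (phiHs T) (- (m.+1 - k)%:R).
Proof.
move=> u; rewrite /phiHs.
have sg j : j != ord0 -> (-1) ^+ (odd_perm (u * tau j)%g) = - (-1) ^+ (odd_perm u) :> algC.
  by move=> j0; rewrite odd_permM odd_tperm eq_sym j0 signr_addb expr1 mulrN1.
rewrite (eq_bigr (fun j => - (-1) ^+ (odd_perm u) * phiH T (u * tau j)%g)); last first.
  by move=> j j0; rewrite sg.
by rewrite -mulr_sumr phiH_eig mulNr mulNr mulrCA.
Qed.

Let D := [set T : {set 'I_m} | #|T| == k].
Let c := #|D|.
Let ST (i : 'I_c) : {set 'I_m} := enum_val i.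
Lemma cardST i : #|ST i| = k.
Proof. by have := enum_valP i; rewrite inE => /eqP. Qed.

Let tf (S : {set 'I_m}) (y : 'I_n) : 'I_n :=
  if (insub (val y) : option 'I_k) is Some b then v2 (tE hk S b) else y.

Lemma tf_pos S b : tf S (pos b) = v2 (tE hk S b).
Proof. by rewrite /tf /pos /= valK. Qed.

Definition ut (i : 'I_c) : 'S_n :=
  odflt 1%g [pick u : 'S_n | [forall b, u (pos b) == v2 (tE hk (ST i) b)]].

Lemma utP i b : ut i (pos b) = v2 (tE hk (ST i) b).
Proof.
rewrite /ut; case: pickP => [v /forallP H | none] /=; first exact/eqP.
have [||v Hv] := @ext_perm _ [seq pos b | b <- enum 'I_k] (tf (ST i)).
- by rewrite map_inj_uniq ?enum_uniq //; apply: pos_inj.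
- move=> y z /mapP [a _ ->] /mapP [b' _ ->]; rewrite !tf_pos => /v2_inj/tE_inj e.
  by rewrite (e (cardST i)).
have := none v; rewrite /= => /negP; case; apply/forallP => b'.
by rewrite Hv ?tf_pos // map_f // mem_enum.
Qed.

Lemma M_hook i j : phiH (ST i) (ut j) = (i == j)%:R.
Proof.
rewrite /phiH /V.
have -> : (\matrix_(b, a) w (tE hk (ST i) a) (ut j (pos b)))
          = \matrix_(b, a) (tE hk (ST j) b == tE hk (ST i) a)%:R.
  by apply/matrixP => b a; rewrite !mxE utP wv2.
case: eqP => [<- | /eqP ij].
  rewrite (_ : \matrix_(b, a) _ = 1%:M) ?det1 //.
  by apply/matrixP => b a; rewrite !mxE (inj_eq (tE_inj (cardST i))).
have : ST i != ST j by apply: contra ij => /eqP /enum_val_inj ->.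
rewrite eqEcard !cardST leqnn andbT => /subsetPn [t ti tj].
have [a ea] := tE_onto hk (cardST i) ti.
rewrite (det_col0 (j := a)) // => b; rewrite mxE ea; case: eqP => // e.
by move: tj; rewrite -e tE_in // cardST.
Qed.

Lemma card_c : c = 'C(m, k).
Proof. by rewrite /c /D card_draws card_ord. Qed.

Lemma hook_pos : ('C(m, k) <= eig_mult A (m.+1 - k)%:R)%N.
Proof.
rewrite -card_c.
apply: (rank_lb (X := Xf (fun i => phiH (ST i))) (Y := Yf ut)).
  by apply: XfA => i; apply: phiH_eig.
rewrite XfYf (_ : \matrix_(i, j) _ = 1%:M) ?unitmx1 //.
by apply/matrixP => i j; rewrite !mxE M_hook.
Qed.

Lemma hook_neg : ('C(m, k) <= eig_mult A (- (m.+1 - k)%:R))%N.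
Proof.
rewrite -card_c.
apply: (rank_lb (X := Xf (fun i => phiHs (ST i))) (Y := Yf ut)).
  by apply: XfA => i; apply: phiHs_eig.
rewrite XfYf (_ : \matrix_(i, j) _ = diag_mx (\row_j (-1) ^+ (odd_perm (ut j)))).
  rewrite unitmxE det_diag unitfE; apply/prodf_neq0 => i _.
  by rewrite mxE signr_eq0.
apply/matrixP => i j; rewrite !mxE /phiHs M_hook.
by case: eqP => [->|]; rewrite ?mulr1 ?mulr0 ?mulr1n ?mulr0n.
Qed.

End HookFam.

Section Kern.
Variable m : nat.
Local Notation n := m.+2.
Local Notation A := (cayley_adj (Tn n)).
Local Notation tau j := (tperm (ord0 : 'I_n) j).

Definition tp (s : seq 'I_n) (f : 'I_n -> 'I_n) : 'S_n :=
  odflt 1%g [pick u : 'S_n | all (fun y => u y == f y) s].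

Lemma tpP s f : uniq s -> {in s &, injective f} -> {in s, forall y, tp s f y = f y}.
Proof.
move=> us fi; rewrite /tp; case: pickP => [v /allP H | none] /= y ys.
  by apply/eqP/H.
have [v Hv] := ext_perm us fi.
by have := none v; rewrite /= => /negP; case; apply/allP => z zs; rewrite Hv.
Qed.

Lemma block_rank c1 c2 (phi1 : 'I_c1 -> 'S_n -> algC) (phi2 : 'I_c2 -> 'S_n -> algC)
  (u1 : 'I_c1 -> 'S_n) (u2 : 'I_c2 -> 'S_n) lam (d1 d2 : algC) :
  (forall i, eigfun (phi1 i) lam) -> (forall i, eigfun (phi2 i) lam) ->
  (forall i j, phi1 i (u1 j) = d1 * (i == j)%:R) ->
  (forall i j, phi2 i (u1 j) = 0) ->
  (forall i j, phi2 i (u2 j) = d2 * (i == j)%:R) ->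
  d1 != 0 -> d2 != 0 -> (c1 + c2 <= eig_mult A lam)%N.
Proof.
move=> e1 e2 h11 h21 h22 n1 n2.
apply: (rank_lb (X := col_mx (Xf phi1) (Xf phi2)) (Y := row_mx (Yf u1) (Yf u2))).
  by rewrite mul_col_mx !XfA // col_mx0.
rewrite mul_col_row !XfYf.
have -> : \matrix_(i, j) phi2 i (u1 j) = 0 by apply/matrixP => i j; rewrite !mxE h21.
rewrite unitmxE det_ublock unitfE mulf_neq0 //.
  rewrite (_ : \matrix_(i, j) _ = d1%:M) ?det_scalar ?expf_neq0 //.
  by apply/matrixP => i j; rewrite !mxE h11 mulr_natr.
rewrite (_ : \matrix_(i, j) _ = d2%:M) ?det_scalar ?expf_neq0 //.
by apply/matrixP => i j; rewrite !mxE h22 mulr_natr.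
Qed.

Lemma sum_excl (F : 'I_n -> algC) : \sum_(j | j != ord0) F j = \sum_j F j - F ord0.
Proof. by rewrite [in RHS](bigD1 ord0) //= addrAC subrr add0r. Qed.

Lemma sumD (F G : 'I_n -> algC) (s : seq 'I_n) : uniq s ->
  (forall j, j \notin s -> F j = G j) ->
  \sum_j F j = \sum_j G j + \sum_(j <- s) (F j - G j).
Proof.
move=> us H; transitivity (\sum_j G j + \sum_j (F j - G j)); first by rewrite sumrB addrC subrK.
congr (_ + _); rewrite [RHS]big_uniq //.
rewrite [RHS]big_mkcond; apply: eq_bigr => j _; case: ifP => // js.
by rewrite H ?js // subrr.
Qed.

Lemma tau0 y : tau ord0 y = y.
Proof. by rewrite tperm1 perm1. Qed.
Lemma tauD j y : y != ord0 -> y != j -> tau j y = y.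
Proof. by move=> y0 yj; rewrite tpermD // eq_sym. Qed.

Lemma natn : (m.+2)%:R = m%:R + 2 :> algC.
Proof. by rewrite -addn2 natrD. Qed.

Definition zeta (c : algC) (y : 'I_n) : algC := c * (y == ord0)%:R - 1.
Lemma zeta0 c : zeta c ord0 = c - 1. Proof. by rewrite /zeta eqxx mulr1. Qed.
Lemma zetaN c y : y != ord0 -> zeta c y = -1.
Proof. by move=> /negbTE y0; rewrite /zeta y0 mulr0 sub0r. Qed.
Lemma zeta_sum c : \sum_y zeta c y = c - (m.+2)%:R.
Proof.
rewrite sumrB -mulr_sumr sum_delta mulr1 sumr_const card_ord.
by rewrite -[in RHS]mulr_natl mulr1.
Qed.

Variable a : 'I_n -> algC.
Hypothesis a0 : a ord0 = 0.
Hypothesis asum : \sum_y a y = 0.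

Definition v2t (y z : 'I_n) : algC := a z * zeta m%:R y + a y * zeta m%:R z.

Lemma v2t_sym y z : v2t y z = v2t z y.
Proof. by rewrite /v2t addrC. Qed.

Lemma v2t_ker0 z : z != ord0 ->
  \sum_(j | j != ord0) v2t (tau j ord0) (tau j z) = 0.
Proof.
move=> z0.
rewrite sum_excl tau0 tau0 (sumD (G := fun j => v2t j z) (s := [:: z])) //; last first.
  by move=> j; rewrite inE => jz; rewrite tpermL tauD //; rewrite eq_sym.
rewrite big_cons big_nil tpermL tpermR.
have -> : \sum_j v2t j z = a z * (m%:R - (m.+2)%:R) + zeta m%:R z * \sum_j a j.
  by rewrite /v2t big_split /= -mulr_sumr -mulr_suml zeta_sum [_ * zeta _ _]mulrC.
rewrite asum /v2t !zeta0 !zetaN // a0 natn; ring.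
Qed.

Lemma v2t_ker y z : y != z -> \sum_(j | j != ord0) v2t (tau j y) (tau j z) = 0.
Proof.
move=> yz.
have [ey | y0] := eqVneq y ord0.
  by rewrite ey in yz *; apply: v2t_ker0; rewrite eq_sym.
have [ez | z0] := eqVneq z ord0.
  by rewrite ez -[RHS](v2t_ker0 y0); apply: eq_bigr => j _; rewrite v2t_sym.
rewrite sum_excl !tau0 (sumD (G := fun j => v2t y z) (s := [:: y; z])) //; last first.
- by move=> j; rewrite !inE negb_or => /andP [jy jz]; rewrite !tauD // eq_sym.
- by rewrite /= inE yz.
have zy : z != y by rewrite eq_sym.
rewrite !big_cons big_nil tpermR tpermR (tauD y0 yz) (tauD z0 zy).
rewrite sumr_const card_ord -mulr_natl /v2t !zeta0 !zetaN // a0 natn; ring.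
Qed.

End Kern.

Section Kern3.
Variable m : nat.
Local Notation n := m.+2.
Local Notation tau j := (tperm (ord0 : 'I_n) j).
Variables a b : 'I_n -> algC.
Hypotheses (a0 : a ord0 = 0) (b0 : b ord0 = 0).
Hypotheses (asum : \sum_y a y = 0) (bsum : \sum_y b y = 0).

Definition D (y z : 'I_n) := a y * b z - a z * b y.
Definition v3 (x0 x1 x2 : 'I_n) : algC :=
  D x0 x1 * zeta (m%:R - 1) x2 + D x0 x2 * zeta (m%:R - 1) x1.

Lemma Dsuml z : \sum_j D j z = 0.
Proof. by rewrite /D sumrB -mulr_suml -mulr_sumr asum bsum mul0r mulr0 subrr. Qed.
Lemma Dsumr y : \sum_j D y j = 0.
Proof. by rewrite /D sumrB -mulr_sumr -mulr_suml asum bsum mul0r mulr0 subrr. Qed.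

Lemma v3_sym x0 x1 x2 : v3 x0 x1 x2 = v3 x0 x2 x1.
Proof. by rewrite /v3 addrC. Qed.

Lemma v3_ker_0 x1 x2 : x1 != ord0 -> x2 != ord0 -> x1 != x2 ->
  \sum_(j | j != ord0) v3 (tau j ord0) (tau j x1) (tau j x2) = 0.
Proof.
move=> h1 h2 h12; have h21 : x2 != x1 by rewrite eq_sym.
rewrite sum_excl !tau0 (sumD (G := fun j => v3 j x1 x2) (s := [:: x1; x2])); last first.
- by move=> j; rewrite !inE negb_or => /andP [j1 j2]; rewrite tpermL !tauD // eq_sym.
- by rewrite /= inE h12.
have -> : \sum_j v3 j x1 x2 = 0.
  by rewrite /v3 big_split /= -!mulr_suml !Dsuml !mul0r addr0.
rewrite !big_cons big_nil !tpermL !tpermR (tauD h2 h21) (tauD h1 h12).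
by rewrite /v3 /D !zeta0 !zetaN // a0 b0; ring.
Qed.

Lemma v3_ker_1 x0 x2 : x0 != ord0 -> x2 != ord0 -> x0 != x2 ->
  \sum_(j | j != ord0) v3 (tau j x0) (tau j ord0) (tau j x2) = 0.
Proof.
move=> h0 h2 h02; have h20 : x2 != x0 by rewrite eq_sym.
rewrite sum_excl !tau0 (sumD (G := fun j => v3 x0 j x2) (s := [:: x0; x2])); last first.
- by move=> j; rewrite !inE negb_or => /andP [j0 j2]; rewrite tpermL !tauD // eq_sym.
- by rewrite /= inE h02.
have -> : \sum_j v3 x0 j x2 = D x0 x2 * ((m%:R - 1) - (m.+2)%:R).
  by rewrite /v3 big_split /= -mulr_suml -mulr_sumr Dsumr zeta_sum mul0r add0r.
rewrite !big_cons big_nil !tpermL !tpermR (tauD h2 h20) (tauD h0 h02).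
by rewrite /v3 /D !zeta0 !zetaN // a0 b0 natn; ring.
Qed.

Lemma v3_ker x0 x1 x2 : x0 != x1 -> x0 != x2 -> x1 != x2 ->
  \sum_(j | j != ord0) v3 (tau j x0) (tau j x1) (tau j x2) = 0.
Proof.
move=> h01 h02 h12.
have [e0 | n0] := eqVneq x0 ord0.
  by rewrite e0 in h01 h02 *; apply: v3_ker_0; rewrite // eq_sym.
have [e1 | n1] := eqVneq x1 ord0.
  by rewrite e1 in h01 h12 *; apply: v3_ker_1; rewrite // eq_sym.
have [e2 | n2] := eqVneq x2 ord0.
  rewrite e2 in h02 h12 *; rewrite -[RHS](v3_ker_1 n0 n1 h01).
  by apply: eq_bigr => j _; rewrite v3_sym.
have h10 : x1 != x0 by rewrite eq_sym.
have h20 : x2 != x0 by rewrite eq_sym.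
have h21 : x2 != x1 by rewrite eq_sym.
rewrite sum_excl !tau0 (sumD (G := fun j => v3 x0 x1 x2) (s := [:: x0; x1; x2])); last first.
- by move=> j; rewrite !inE !negb_or => /and3P [j0 j1 j2]; rewrite !tauD // eq_sym.
- by rewrite /= !inE negb_or h01 h02 h12.
rewrite !big_cons big_nil !tpermR (tauD n0 h01) (tauD n0 h02) (tauD n1 h10) (tauD n1 h12).
rewrite (tauD n2 h20) (tauD n2 h21) sumr_const card_ord -mulr_natl.
by rewrite /v3 /D !zeta0 !zetaN // a0 b0 natn; ring.
Qed.

End Kern3.

Section KernFam.
Variable m : nat.
Local Notation n := m.+2.
Local Notation A := (cayley_adj (Tn n)).
Local Notation tau j := (tperm (ord0 : 'I_n) j).

Definition two : 'I_n := inord 2.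
Lemma one_neq0' : (one m != ord0). Proof. by rewrite one_neq0. Qed.

Definition phi2 (p : 'I_m) (u : 'S_n) : algC := v2t (w p) (u ord0) (u (one m)).

Lemma phi2_eig p : eigfun (phi2 p) 0.
Proof.
move=> u; rewrite mul0r -[RHS](@v2t_ker m (w p) (w0 p) (wsum p) (u ord0) (u (one m))).
  by apply: eq_bigr => j _; rewrite /phi2 !permM.
by rewrite (inj_eq perm_inj) eq_sym one_neq0'.
Qed.

Lemma phi2_test p q (u : 'S_n) : u ord0 = ord0 -> u (one m) = v2 q ->
  phi2 p u = (m%:R - 1) * (p == q)%:R.
Proof.
move=> e0 e1; rewrite /phi2 e0 e1 /v2t w0 wv2 zeta0 mul0r addr0 mulrC.
by rewrite eq_sym.
Qed.

Definition u2 (q : 'I_m) : 'S_n :=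
  tp [:: ord0; one m] (fun y => if y == ord0 then ord0 else v2 q).

Lemma u2P q : u2 q ord0 = ord0 /\ u2 q (one m) = v2 q.
Proof.
have H := @tpP m [:: ord0; one m] (fun y => if y == ord0 then ord0 else v2 q).
rewrite /u2 !H ?inE ?eqxx ?orbT //= ?(negbTE one_neq0') //;
  by apply: uniq_map_in.
Qed.


Lemma two_val : (1 <= m)%N -> val two = 2%N.
Proof. by move=> h; change (nat_of_ord (@inord m.+1 2) = 2%N); rewrite inordK. Qed.

Section Big.
Hypothesis hm : (3 <= m)%N.
Lemma hk2 : (2 <= m)%N. Proof. exact: ltnW. Qed.
Lemma two_neq0 : two != ord0.
Proof. by rewrite -val_eqE /= two_val // ltnW // ltnW. Qed.
Lemma two_neq1 : two != one m.
Proof. by rewrite -val_eqE /= two_val // ltnW // ltnW. Qed.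

Let DS := [set S : {set 'I_m} | #|S| == 2].
Let c2 := #|DS|.
Let S2 (i : 'I_c2) : {set 'I_m} := enum_val i.
Lemma cardS2 i : #|S2 i| = 2.
Proof. by have := enum_valP i; rewrite inE => /eqP. Qed.
Let t0 (S : {set 'I_m}) := tE hk2 S ord0.
Let t1 (S : {set 'I_m}) := tE hk2 S ord_max.
Lemma t01 i : t0 (S2 i) != t1 (S2 i).
Proof. by apply/negP => /eqP /(tE_inj (cardS2 i)). Qed.

Lemma S2_eq i j : t0 (S2 i) \in S2 j -> t1 (S2 i) \in S2 j -> i = j.
Proof.
move=> h0 h1; apply: enum_val_inj; apply/eqP; rewrite eqEcard !cardS2 leqnn andbT.
apply/subsetP => t tS; have [a <-] := tE_onto hk2 (cardS2 i) tS.
by case: a => [[|[|//]]] ha; [rewrite (_ : Ordinal ha = ord0) // | rewrite (_ : Ordinal ha = ord_max) //];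
  apply: val_inj.
Qed.

Definition phi3 (i : 'I_c2) (u : 'S_n) : algC :=
  v3 (w (t0 (S2 i))) (w (t1 (S2 i))) (u ord0) (u (one m)) (u two).

Lemma phi3_eig i : eigfun (phi3 i) 0.
Proof.
move=> u; rewrite mul0r -[RHS](@v3_ker m (w (t0 (S2 i))) (w (t1 (S2 i))) (w0 _) (w0 _)
   (wsum _) (wsum _) (u ord0) (u (one m)) (u two)).
- by apply: eq_bigr => j _; rewrite /phi3 !permM.
- by rewrite (inj_eq perm_inj) eq_sym one_neq0'.
- by rewrite (inj_eq perm_inj) eq_sym two_neq0.
- by rewrite (inj_eq perm_inj) eq_sym two_neq1.
Qed.

Definition u3 (i : 'I_c2) : 'S_n :=
  tp [:: ord0; one m; two] (fun y => if y == ord0 then v2 (t0 (S2 i))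
      else if y == one m then v2 (t1 (S2 i)) else ord0).

Lemma u3P i : [/\ u3 i ord0 = v2 (t0 (S2 i)), u3 i (one m) = v2 (t1 (S2 i)) & u3 i two = ord0].
Proof.
have H := @tpP m [:: ord0; one m; two] (fun y => if y == ord0 then v2 (t0 (S2 i))
      else if y == one m then v2 (t1 (S2 i)) else ord0).
have us : uniq [:: ord0; one m; two].
  by rewrite /= !inE negb_or eq_sym one_neq0' eq_sym two_neq0 eq_sym two_neq1.
have fi : {in [:: ord0; one m; two] &, injective (fun y => if y == ord0 then v2 (t0 (S2 i))
      else if y == one m then v2 (t1 (S2 i)) else ord0)}.
  apply: uniq_map_in; rewrite /= (negbTE two_neq0) (negbTE two_neq1).
  by rewrite !inE negb_or (inj_eq (@v2_inj m)) t01 !v2_neq0.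
rewrite /u3 !H // ?inE ?eqxx ?orbT //.
by rewrite (negbTE one_neq0') (negbTE two_neq0) (negbTE two_neq1).
Qed.

Lemma phi3_u2 i q : phi3 i (u2 q) = 0.
Proof.
have [e0 _] := u2P q.
by rewrite /phi3 e0 /v3 /D !w0 !mul0r !mulr0 !subrr !mul0r addr0.
Qed.

Lemma phi3_u3 i j : phi3 i (u3 j) = (m%:R - 2) * (i == j)%:R.
Proof.
have [e0 e1 e2] := u3P j.
rewrite /phi3 e0 e1 e2 /v3 /D !w0 !mul0r !mulr0 subrr mul0r addr0 zeta0 !wv2.
case: (eqVneq i j) => [-> | ij].
  by rewrite !eqxx eq_sym (negbTE (t01 j)) mulr0 subr0 mulr1; ring.
rewrite mulr0.
have H0 : t0 (S2 j) \in S2 j by apply: tE_in; apply: cardS2.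
have H1 : t1 (S2 j) \in S2 j by apply: tE_in; apply: cardS2.
have P1 : ~~ ((t0 (S2 j) == t0 (S2 i)) && (t1 (S2 j) == t1 (S2 i))).
  apply/andP => -[/eqP a /eqP b]; case/negP: ij; apply/eqP/S2_eq.
  - by move: H0; rewrite a.
  - by move: H1; rewrite b.
have P2 : ~~ ((t1 (S2 j) == t0 (S2 i)) && (t0 (S2 j) == t1 (S2 i))).
  apply/andP => -[/eqP a /eqP b]; case/negP: ij; apply/eqP/S2_eq.
  - by move: H1; rewrite a.
  - by move: H0; rewrite b.
move: P1 P2; case: (t0 (S2 j) == t0 (S2 i)); case: (t1 (S2 j) == t1 (S2 i));
  case: (t1 (S2 j) == t0 (S2 i)); case: (t0 (S2 j) == t1 (S2 i)) => //= _ _;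
  by rewrite ?(mulr0, mul0r, mulr1, mul1r, subrr, subr0).
Qed.

Lemma kern_big : ('C(m.+1, 2) <= eig_mult A (0%R : algC))%N.
Proof.
rewrite binS bin1 addnC.
have -> : 'C(m, 2) = c2 by rewrite /c2 /DS card_draws card_ord.
apply: (block_rank (phi1 := phi2) (phi2 := phi3) (u1 := u2) (u2 := u3)
  (d1 := m%:R - 1) (d2 := m%:R - 2)).
- exact: phi2_eig.
- exact: phi3_eig.
- by move=> i j; have [e0 e1] := u2P j; rewrite (phi2_test _ e0 e1).
- by move=> i j; apply: phi3_u2.
- by move=> i j; apply: phi3_u3.
- rewrite subr_eq0; apply/eqP => e.
  by have := congr1 (fun x : algC => x) e; move/eqP; rewrite (eqr_nat _ m 1) => /eqP em; move: hm; rewrite em.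
rewrite subr_eq0; apply/eqP => e.
by have := e; move/eqP; rewrite (eqr_nat _ m 2) => /eqP em; move: hm; rewrite em.
Qed.

End Big.
End KernFam.

Section Four.
Local Notation A := (cayley_adj (Tn 4)).
Let oth (p : 'I_2) : 'I_2 := if p == ord0 then ord_max else ord0.
Lemma two4_0 : (two 2 != ord0). Proof. by rewrite -val_eqE /= two_val. Qed.
Lemma two4_1 : (two 2 != one 2). Proof. by rewrite -val_eqE /= two_val. Qed.

Let ga (y : 'I_4) : algC := w (ord0 : 'I_2) y - w (ord_max : 'I_2) y.
Lemma ga0 : ga ord0 = 0. Proof. by rewrite /ga !w0 subrr. Qed.
Lemma gasum : \sum_y ga y = 0. Proof. by rewrite /ga sumrB !wsum subrr. Qed.

Let g (i : 'I_1) (u : 'S_4) : algC := v2t ga (u (one 2)) (u (two 2)).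
Lemma g_eig i : eigfun (g i) 0.
Proof.
move=> u; rewrite mul0r -[RHS](@v2t_ker 2 ga ga0 gasum (u (one 2)) (u (two 2))).
  by apply: eq_bigr => j _; rewrite /g !permM.
by rewrite (inj_eq perm_inj) eq_sym two4_1.
Qed.

Let u2' (q : 'I_2) : 'S_4 :=
  tp [:: ord0; one 2; two 2] (fun y => if y == ord0 then ord0 else if y == one 2 then v2 q
     else v2 (oth q)).
Lemma u2'P q : [/\ u2' q ord0 = ord0, u2' q (one 2) = v2 q & u2' q (two 2) = v2 (oth q)].
Proof.
have us : uniq [:: ord0; one 2; two 2].
  by rewrite /= !inE negb_or eq_sym (one_neq0' 2) eq_sym two4_0 eq_sym two4_1.
have fi : {in [:: ord0; one 2; two 2] &, injective (fun y => if y == ord0 then ord0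
     else if y == one 2 then v2 q else v2 (oth q))}.
  apply: uniq_map_in; rewrite /= (negbTE two4_0) (negbTE two4_1).
  by rewrite !inE negb_or (inj_eq (@v2_inj 2)) eq_sym !v2_neq0 /oth; case: q => [[|[|]]].
have H := @tpP 2 [:: ord0; one 2; two 2] (fun y => if y == ord0 then ord0 else if y == one 2 then v2 q
     else v2 (oth q)).
rewrite /u2' !H // ?inE ?eqxx ?orbT //.
by rewrite (negbTE (one_neq0' 2)) (negbTE two4_0) (negbTE two4_1).
Qed.

Let ug (i : 'I_1) : 'S_4 :=
  tp [:: one 2; two 2] (fun y => if y == one 2 then ord0 else v2 (ord0 : 'I_2)).
Lemma ugP i : ug i (one 2) = ord0 /\ ug i (two 2) = v2 (ord0 : 'I_2).
Proof.
have H := @tpP 2 [:: one 2; two 2] (fun y => if y == one 2 then ord0 else v2 (ord0 : 'I_2)).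
have us : uniq [:: one 2; two 2] by rewrite /= inE eq_sym two4_1.
have fi : {in [:: one 2; two 2] &, injective (fun y => if y == one 2 then ord0 else v2 (ord0 : 'I_2))}.
  by apply: uniq_map_in; rewrite /= (negbTE two4_1) inE eq_sym v2_neq0.
by rewrite /ug !H // ?inE ?eqxx ?orbT // (negbTE two4_1).
Qed.

Lemma kern4 : ('C(3, 2) <= eig_mult A (0%R : algC))%N.
Proof.
have -> : 'C(3, 2) = (2 + 1)%N by [].
apply: (block_rank (phi1 := @phi2 2) (phi2 := g) (u1 := u2') (u2 := ug)
  (d1 := 2%:R - 1) (d2 := 2%:R - 1)).
- exact: phi2_eig.
- exact: g_eig.
- by move=> i j; have [e0 e1 _] := u2'P j; rewrite (phi2_test _ e0 e1).
- move=> i j; have [_ e1 e2] := u2'P j.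
  rewrite /g e1 e2 /v2t !zetaN ?v2_neq0 // /ga !wv2 /oth.
  by case: j {e1 e2} => [[|[|//]]] hj /=; rewrite ?(mulr0n, mulr1n, subr0, sub0r, opprK); ring.
- move=> i j; have [e1 e2] := ugP j.
  rewrite /g e1 e2 /v2t zeta0 ga0 mul0r addr0 /ga !wv2 /= !ord1.
  by rewrite eqxx subr0 mul1r mulr1n mulr1.
- by rewrite (_ : 2%:R = 1 + 1) // addrK oner_neq0.
by rewrite (_ : 2%:R = 1 + 1) // addrK oner_neq0.
Qed.
End Four.

Unset Implicit Arguments.

Theorem theorem1 (n : nat) (hn : (2 <= n)%N) :
  (forall l : nat, (1 <= l <= n.-1)%N ->
     [/\ eigenvalue (cayley_adj (Tn n)) ((n - l)%N%:R : algC),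
         ('C(n - 2, l - 1) <= eig_mult (cayley_adj (Tn n)) ((n - l)%N%:R : algC)%R)%N,
         eigenvalue (cayley_adj (Tn n)) (- ((n - l)%N%:R : algC))
       & ('C(n - 2, l - 1) <= eig_mult (cayley_adj (Tn n)) (- ((n - l)%N%:R : algC))%R)%N])
  /\
  ((4 <= n)%N ->
     eigenvalue (cayley_adj (Tn n)) (0 : algC)
     /\ ('C(n - 1, 2) <= eig_mult (cayley_adj (Tn n)) (0 : algC)%R)%N).
Proof.
case: n hn => [|[|m]] // _; split.
  move=> l /andP [l1 ln].
  have hl : l = (l.-1).+1 by rewrite prednK.
  set k := l.-1 in hl; rewrite hl /= in ln.
  have hk : (k <= m)%N by [].
  have e1 : (m.+2 - l = m.+1 - k)%N by rewrite hl subSS.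
  have e2 : (m.+2 - 2 = m)%N by rewrite subSS subSS subn0.
  have e3 : (l - 1 = k)%N by rewrite hl subSS subn0.
  rewrite e1 e2 e3.
  have hp := hook_pos hk; have hn := hook_neg hk.
  have c0 : (0 < 'C(m, k))%N by rewrite bin_gt0.
  split => //; apply: eigenvalue_of.
  - exact: leq_trans c0 hp.
  - exact: leq_trans c0 hn.
move=> h4.
have e : (m.+2 - 1 = m.+1)%N by rewrite subSS subn0.
rewrite e.
have [m2 | m3] := eqVneq m 2.
  rewrite m2; have h := kern4; split => //; apply: eigenvalue_of.
  by apply: leq_trans h.
have hm : (3 <= m)%N by rewrite ltn_neqAle eq_sym m3 /=.
have h := kern_big hm; split => //; apply: eigenvalue_of.
have c0 : (0 < 'C(m.+1, 2))%N by rewrite bin_gt0 ltnS ltnW // ltnW.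
exact: leq_trans c0 h.
Qed.
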